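(* Let $c$ be a parameter and let $$\Psi(x,\hbar):=\sum_{j\ge0}s_{(j)}(\tilde{\mathbf t}/\hbar)\,e^{\frac\hbar2j(j-1)}x^j\quad\text{with }\tilde t_k=c^{k-1}\ (k\ge1).$$ Then, with $\hat x=x\cdot$, $\hat y=\hbar x\frac{\partial}{\partial x}$, $$\Big(\frac{\hat xe^{\hat y}}{(1-c\,\hat xe^{\hat y})^2}-\hat y\Big)\Psi=0\quad\text{and}\quad\Big(1-\big(e^{-\hat y}\hat x^{-1}-2c+c^2\hat xe^{\hat y}\big)\hat y\Big)\Psi(x,\hbar)=0.$$ For $c=0$ this reduces to $(e^{-\hat y}\hat x^{-1}\hat y-1)\Psi=0$ for the wave function of single Hurwitz numbers.
   Context: $s_{(j)}$ is defined by $\exp(\sum_{m\ge1}t_mx^m)=\sum_{j\ge0}s_{(j)}(\mathbf t)x^j$ and $\tilde{\mathbf t}/\hbar=(\tilde t_1/\hbar,\tilde t_2/\hbar,\dots)$. The operator $(1-c\hat xe^{\hat y})^{-2}$ is expanded as a power series in $c\hat xe^{\hat y}$; $e^{\pm\hat y}$ acts on $x^m$ by multiplication by $e^{\pm\hbar m}$; all series are formal in $x,\hbar,c$. *)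

(* Defs.v *)
From HB Require Import structures.
From mathcomp Require Import all_boot all_order all_algebra.
Set Implicit Arguments. Unset Strict Implicit. Unset Printing Implicit Defensive.
Import Order.TTheory GRing.Theory Num.Theory.
Local Open Scope ring_scope.

(* Coefficients live in a field F of characteristic 0
   (the parameter c is an arbitrary element of F; taking
   F = {fraction {poly rat}} and c = 'X gives the "formal in c" case). *)

Section FormalSeries.
Variable F : fieldType.

(* ---------- formal Laurent series in hbar ----------
   LSer v f  represents  hbar^v * sum_{n>=0} f n hbar^n. *)
Record lser := LSer { lval : int; lcoef : nat -> F }.

Definition lcoefz (s : lser) (k : int) : F :=
  if (lval s <= k)%R then lcoef s `|k - lval s|%N else 0.

Definition lzero : lser := LSer 0 (fun _ => 0).
Definition lconst (a : F) : lser := LSer 0 (fun n => if n == 0%N then a else 0).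
Definition lhbar : lser := LSer 1 (fun n => if n == 0%N then 1 else 0).
Definition lhbarinv : lser := LSer (-1) (fun n => if n == 0%N then 1 else 0).
Definition lexp (a : F) : lser := LSer 0 (fun n => a ^+ n / (n`!)%:R).
Definition ladd (s t : lser) : lser :=
  let v := Order.min (lval s) (lval t) in
  LSer v (fun n => lcoefz s (v + n%:Z) + lcoefz t (v + n%:Z)).
Definition lopp (s : lser) : lser := LSer (lval s) (fun n => - lcoef s n).
Definition lscale (a : F) (s : lser) : lser := LSer (lval s) (fun n => a * lcoef s n).
Definition lmul (s t : lser) : lser :=
  LSer (lval s + lval t)
       (fun n => \sum_(i < n.+1) lcoef s i * lcoef t (n - i)%N).
Definition lsum (l : seq lser) : lser := foldr ladd lzero l.

(* ---------- formal power series in x with hbar-Laurent coefficients ----------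
   G : nat -> lser,  G N = coefficient of x^N. *)
Definition xunit : nat -> lser := fun j => if j == 0%N then lconst 1 else lzero.
Definition xmul (f g : nat -> lser) : nat -> lser :=
  fun j => lsum [seq lmul (f i) (g (j - i)%N) | i <- iota 0 j.+1].
Definition xpow (f : nat -> lser) (k : nat) : nat -> lser := iter k (xmul f) xunit.
(* exp of a power series f with f 0 = 0: the x^j coefficient of
   sum_k f^k / k!  (terms with k > j do not contribute) *)
Definition xexp (f : nat -> lser) : nat -> lser :=
  fun j => lsum [seq lscale ((k`!)%:R)^-1 (xpow f k j) | k <- iota 0 j.+1].

Definition schur_row (t : nat -> lser) (j : nat) : lser :=
  xexp (fun m => if m == 0%N then lzero else t m) j.

Definition ttilde_hbar (c : F) (k : nat) : lser := lmul (lconst (c ^+ k.-1)) lhbarinv.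

Definition Psi (c : F) : nat -> lser :=
  fun j => lmul (schur_row (ttilde_hbar c) j) (lexp ((j * (j - 1))%N%:R / 2)).

Definition xadd (G H : nat -> lser) : nat -> lser := fun N => ladd (G N) (H N).
Definition xopp (G : nat -> lser) : nat -> lser := fun N => lopp (G N).
Definition xscale (a : F) (G : nat -> lser) : nat -> lser := fun N => lscale a (G N).
Definition op_y (G : nat -> lser) : nat -> lser := fun N => lmul lhbar (lscale N%:R (G N)).
Definition op_ey (a : int) (G : nat -> lser) : nat -> lser :=
  fun N => lmul (lexp ((a * N%:Z)%:~R)) (G N).
Definition op_x (G : nat -> lser) : nat -> lser :=
  fun N => if N is N'.+1 then G N' else lzero.
(* xhat^{-1}; only applied to series with vanishing x^0 coefficient
   (namely yhat Psi), so dropping the x^{-1} term is exact *)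
Definition op_xinv (G : nat -> lser) : nat -> lser := fun N => G N.+1.
Definition op_xey (G : nat -> lser) : nat -> lser := op_x (op_ey 1 G).
(* (1 - c xhat e^{yhat})^{-2} = sum_n (n+1) (c xhat e^{yhat})^n ;
   on power series in x only n <= N contributes to x^N *)
Definition op_geom2 (c : F) (G : nat -> lser) : nat -> lser :=
  fun N => lsum [seq lscale ((n.+1)%:R * c ^+ n) (iter n op_xey G N) | n <- iota 0 N.+1].

Definition xzero (G : nat -> lser) : Prop := forall (N : nat) (k : int), lcoefz (G N) k = 0.

End FormalSeries.

(* Main.v *)
Require Import Defs.
From HB Require Import structures.
From mathcomp Require Import all_boot all_order all_algebra.
From mathcomp Require Import zify ring.
Import Order.TTheory GRing.Theory Num.Theory.
Local Open Scope ring_scope.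
Set Implicit Arguments. Unset Strict Implicit. Unset Printing Implicit Defensive.

Notation sem := lcoefz.

Lemma sem_lt (F : fieldType) (s : lser F) k : k < lval s -> sem s k = 0.
Proof. by rewrite /lcoefz ltNge => /negbTE ->. Qed.

Lemma sem_val (F : fieldType) (s : lser F) (n : nat) : sem s (lval s + n%:Z) = lcoef s n.
Proof. rewrite /lcoefz ifT; last lia. congr lcoef; lia. Qed.

Lemma sum_ext0 (F : fieldType) (h : nat -> F) W1 W2 :
  (forall n, (W1 <= n)%N -> h n = 0) -> (forall n, (W2 <= n)%N -> h n = 0) ->
  \sum_(0 <= n < W1) h n = \sum_(0 <= n < W2) h n.
Proof.
wlog le: W1 W2 / (W1 <= W2)%N.
  move=> H h1 h2; case: (leqP W1 W2) => l; first exact: H.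
  by symmetry; apply: H => //; exact: ltnW.
move=> h1 _. rewrite (big_cat_nat (leq0n W1) le) /=.
rewrite [X in _ = _ + X]big_nat_cond [X in _ = _ + X]big1 ?addr0 //.
by move=> i /andP[/andP[hi _] _]; exact: h1.
Qed.

Lemma sem_ladd (F : fieldType) (s t : lser F) k : sem (ladd s t) k = sem s k + sem t k.
Proof.
rewrite {1}/lcoefz /=. case: ifP => hv.
  have -> : Order.min (lval s) (lval t) + (`|k - Order.min (lval s) (lval t)|%N)%:Z = k by lia.
  by [].
rewrite !sem_lt ?addr0 //; lia.
Qed.

Lemma sem_lzero (F : fieldType) k : sem (lzero F) k = 0.
Proof. by rewrite /lcoefz /=; case: ifP. Qed.

Lemma sem_lopp (F : fieldType) (s : lser F) k : sem (lopp s) k = - sem s k.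
Proof. by rewrite /lcoefz /=; case: ifP; rewrite ?oppr0. Qed.

Lemma sem_lscale (F : fieldType) a (s : lser F) k : sem (lscale a s) k = a * sem s k.
Proof. by rewrite /lcoefz /=; case: ifP; rewrite ?mulr0. Qed.

Lemma sem_lsum (F : fieldType) (T : Type) (r : seq T) (f : T -> lser F) k :
  sem (lsum [seq f i | i <- r]) k = \sum_(i <- r) sem (f i) k.
Proof.
elim: r => [|x r IH]; first by rewrite big_nil sem_lzero.
by rewrite big_cons /= sem_ladd IH.
Qed.

Lemma sem_lconst (F : fieldType) (a : F) k : sem (lconst a) k = if k == 0 then a else 0.
Proof. rewrite /lcoefz /=. by repeat (case: ifP => ?); try done; exfalso; lia. Qed.

Lemma sem_lhbar (F : fieldType) k : sem (lhbar F) k = if k == 1 then 1 else 0.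
Proof. rewrite /lcoefz /=. by repeat (case: ifP => ?); try done; exfalso; lia. Qed.

Lemma sem_lhbarinv (F : fieldType) k : sem (lhbarinv F) k = if k == -1 then 1 else 0.
Proof. rewrite /lcoefz /=. by repeat (case: ifP => ?); try done; exfalso; lia. Qed.

Definition alpha (F : fieldType) (a : F) (n : nat) : F := a ^+ n / (n`!)%:R.

Lemma sem_lexp (F : fieldType) (a : F) (n : nat) : sem (lexp a) n%:Z = alpha a n.
Proof. by rewrite -[n%:Z]add0r (sem_val (lexp a)). Qed.

Lemma lmul_window (F : fieldType) (s t : lser F) (lo : int) (W : nat) (k : int) :
  lo <= lval s -> k - lval t < lo + W%:Z ->
  sem (lmul s t) k = \sum_(0 <= n < W) sem s (lo + n%:Z) * sem t (k - (lo + n%:Z)).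
Proof.
move=> hlo hW.
case: (ltP k (lval s + lval t)) => hk.
  rewrite sem_lt //= big_nat_cond big1 // => n _.
  case: (ltP (lo + n%:Z) (lval s)) => h1; first by rewrite sem_lt ?mul0r.
  by rewrite (@sem_lt _ t) ?mulr0 //; lia.
set e := absz (lval s - lo)%R. set D := absz (k - (lval s + lval t))%R.
rewrite (@sum_ext0 _ _ W (e + D).+1); first last.
- move=> n hn. rewrite (@sem_lt _ t) ?mulr0 //; lia.
- move=> n hn. rewrite (@sem_lt _ t) ?mulr0 //; lia.
rewrite (big_cat_nat (leq0n e) (_ : e <= (e + D).+1)%N) /=; last lia.
rewrite big_nat_cond big1 ?add0r; last first.
  move=> n /andP[/andP[_ hn] _]; rewrite sem_lt ?mul0r //; lia.
rewrite -{1}[e]add0n big_addn.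
have -> : ((e + D).+1 - e = D.+1)%N by lia.
rewrite /lcoefz ifT //= (_ : `|(k - (lval s + lval t))%R|%N = D) // big_mkord.
apply: eq_bigr => i _.
have hi := ltn_ord i. rewrite /e.
rewrite ifT; last lia. rewrite ifT; last lia.
congr (lcoef _ _ * lcoef _ _).
  rewrite (_ : `|(lo + (i + absz (lval s - lo)%R)%N - lval s)%R|%N = absz (lo + (i + absz (lval s - lo)%R)%N - lval s)%R) //; lia.
rewrite (_ : `|(k - (lo + (i + absz (lval s - lo)%R)%N) - lval t)%R|%N = absz (k - (lo + (i + absz (lval s - lo)%R)%N) - lval t)%R) //; lia.
Qed.

Lemma lmul_comm (F : fieldType) (s t : lser F) k : sem (lmul s t) k = sem (lmul t s) k.
Proof.
rewrite /lcoefz /= [lval t + _]addrC. case: ifP => // _.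
move: (`|(k - (lval s + lval t))%R|%N) => D.
rewrite (reindex_inj rev_ord_inj) /=; apply: eq_bigr => i _.
rewrite mulrC; congr (_ * _); congr lcoef; have := ltn_ord i; lia.
Qed.

Lemma sum_single (F : fieldType) (h : nat -> F) m W :
  (m < W)%N -> (forall n : nat, n <> m -> h n = 0) -> \sum_(0 <= n < W) h n = h m.
Proof.
move=> hm h0. rewrite big_mkord (bigD1 (Ordinal hm)) //= big1 ?addr0 // => i /eqP hi.
apply: h0 => e; apply: hi; exact: val_inj.
Qed.

Lemma lmul_delta (F : fieldType) (s t : lser F) (p k : int) :
  (forall i, i != p -> sem s i = 0) -> sem (lmul s t) k = sem s p * sem t (k - p).
Proof.
move=> hs.
set lo := Order.min (lval s) p.
rewrite (@lmul_window _ s t lo ((absz (k - lval t - lo)%R) + (absz (p - lo)%R)).+1 k); try lia.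
rewrite (@sum_single _ _ (absz (p - lo)%R)); last 2 first.
- lia.
- move=> n hn; rewrite hs ?mul0r //; apply/eqP => e; apply: hn; lia.
have -> : lo + (absz (p - lo)%R)%:Z = p by lia.
by [].
Qed.

Lemma sem_mul_hbar (F : fieldType) (t : lser F) k : sem (lmul (lhbar F) t) k = sem t (k - 1).
Proof.
rewrite (@lmul_delta _ _ _ 1) ?sem_lhbar ?mul1r //.
by move=> i /negbTE hi; rewrite sem_lhbar hi.
Qed.

Lemma sem_mul_const (F : fieldType) a (t : lser F) k : sem (lmul (lconst a) t) k = a * sem t k.
Proof.
rewrite (@lmul_delta _ _ _ 0) ?sem_lconst ?subr0 //.
by move=> i /negbTE hi; rewrite sem_lconst hi.
Qed.

Lemma sem_mul_zero (F : fieldType) (t : lser F) k : sem (lmul (lzero F) t) k = 0.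
Proof. by rewrite (@lmul_delta _ _ _ 0) ?sem_lzero ?mul0r // => i _; rewrite sem_lzero. Qed.

Lemma sem_ttilde (F : fieldType) (c : F) m k :
  sem (ttilde_hbar c m) k = if k == -1 then c ^+ m.-1 else 0.
Proof.
rewrite /ttilde_hbar sem_mul_const sem_lhbarinv.
by case: ifP; rewrite ?mulr1 ?mulr0.
Qed.

Definition zb (F : fieldType) (g : int -> F) (lo : int) := forall k, k < lo -> g k = 0.

Definition expS (F : fieldType) (a : F) (lo : int) (g : int -> F) (k : int) : F :=
  \sum_(0 <= n < (absz (k - lo)%R).+1) alpha a n * g (k - n%:Z).

Lemma expS_W (F : fieldType) a lo (g : int -> F) k (W : nat) :
  zb g lo -> k - W%:Z < lo -> expS a lo g k = \sum_(0 <= n < W) alpha a n * g (k - n%:Z).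
Proof.
move=> hg hW; rewrite /expS; apply: sum_ext0 => n hn; rewrite hg ?mulr0 //; lia.
Qed.

Lemma zb_sem (F : fieldType) (s : lser F) lo : lo <= lval s -> zb (sem s) lo.
Proof. move=> h k hk; apply: sem_lt; lia. Qed.

Lemma zb_le (F : fieldType) (g : int -> F) lo lo' : zb g lo -> lo' <= lo -> zb g lo'.
Proof. move=> h hl k hk; apply: h; lia. Qed.

Lemma lmul_exp (F : fieldType) a (t : lser F) lo k :
  zb (sem t) lo -> sem (lmul (lexp a) t) k = expS a lo (sem t) k.
Proof.
move=> ht.
rewrite (@expS_W _ a lo _ k ((absz (k - lval t)%R) + (absz (k - lo)%R)).+1) //; last lia.
rewrite (@lmul_window _ _ _ 0 ((absz (k - lval t)%R) + (absz (k - lo)%R)).+1 k) //=; last lia.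
by apply: eq_bigr => n _; rewrite add0r sem_lexp.
Qed.

Lemma zb_expS (F : fieldType) a lo (g : int -> F) : zb g lo -> zb (expS a lo g) lo.
Proof.
move=> hg k hk; rewrite /expS big_nat_cond big1 // => n _; rewrite hg ?mulr0 //; lia.
Qed.

Lemma expS_ext (F : fieldType) a lo (f g : int -> F) k :
  (forall q, f q = g q) -> expS a lo f k = expS a lo g k.
Proof. by move=> h; rewrite /expS; apply: eq_bigr => n _; rewrite h. Qed.

Lemma expS_lo (F : fieldType) a lo lo' (g : int -> F) k :
  zb g lo -> zb g lo' -> expS a lo g k = expS a lo' g k.
Proof.
move=> h h'.
rewrite (@expS_W _ a lo _ k ((absz (k - lo)%R) + (absz (k - lo')%R)).+1) //; last lia.
rewrite (@expS_W _ a lo' _ k ((absz (k - lo)%R) + (absz (k - lo')%R)).+1) //; lia.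
Qed.

Lemma expS_shift (F : fieldType) a lo (g : int -> F) k :
  zb g lo -> expS a lo (fun q => g (q - 1)) k = expS a lo g (k - 1).
Proof.
move=> hg.
have hg' : zb (fun q => g (q - 1)) lo by move=> q hq; apply: hg; lia.
rewrite (@expS_W _ a lo _ k (absz (k - lo)%R).+2) //; last lia.
rewrite (@expS_W _ a lo _ (k - 1) (absz (k - lo)%R).+2) //; last lia.
by apply: eq_bigr => n _; congr (_ * g _); lia.
Qed.

Lemma expS_scale (F : fieldType) a lo (g : int -> F) x k :
  expS a lo (fun q => x * g q) k = x * expS a lo g k.
Proof. by rewrite /expS mulr_sumr; apply: eq_bigr => n _; rewrite mulrCA. Qed.

Lemma expS_addf (F : fieldType) a lo (f g : int -> F) k :
  expS a lo (fun q => f q + g q) k = expS a lo f k + expS a lo g k.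
Proof. by rewrite /expS -big_split; apply: eq_bigr => n _; rewrite mulrDr. Qed.

Lemma expS_oppf (F : fieldType) a lo (f : int -> F) k :
  expS a lo (fun q => - f q) k = - expS a lo f k.
Proof. by rewrite /expS -sumrN; apply: eq_bigr => n _; rewrite mulrN. Qed.

Lemma expS_sum (F : fieldType) (T : Type) (r : seq T) a lo (f : T -> int -> F) k :
  expS a lo (fun q => \sum_(i <- r) f i q) k = \sum_(i <- r) expS a lo (f i) k.
Proof.
rewrite /expS exchange_big /=; apply: eq_bigr => n _; by rewrite mulr_sumr.
Qed.

Lemma expS0 (F : fieldType) a lo k : expS a lo (fun _ => 0 : F) k = 0.
Proof. by rewrite /expS big1 // => n _; rewrite mulr0. Qed.

Lemma fact_nz (F : fieldType) (hF : [pchar F] =i pred0) n : (n`!)%:R != 0 :> F.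
Proof. by rewrite (pcharf0P _).1 // -lt0n fact_gt0. Qed.

Lemma alphaD (F : fieldType) (hF : [pchar F] =i pred0) (a b : F) p :
  alpha (a + b) p = \sum_(0 <= n < p.+1) alpha a n * alpha b (p - n).
Proof.
rewrite /alpha addrC exprDn big_mkord mulr_suml; apply: eq_bigr => [[i hi]] _ /=.
have hip : (i <= p)%N by [].
have e : (p`!)%:R = ('C(p, i))%:R * (i`!)%:R * ((p - i)`!)%:R :> F.
  by rewrite -!natrM -mulnA bin_fact.
rewrite e -mulr_natr. field.
by rewrite !fact_nz // (pcharf0P _).1 // -lt0n bin_gt0.
Qed.

Lemma sum_tri (F : fieldType) (h : nat -> nat -> F) T :
  \sum_(0 <= p < T) \sum_(0 <= n < p.+1) h n (p - n)%N =
  \sum_(0 <= n < T) \sum_(0 <= m < T - n) h n m.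
Proof.
elim: T => [|T IH]; first by rewrite !big_geq.
rewrite big_nat_recr //= IH.
transitivity (\sum_(0 <= n < T.+1) (\sum_(0 <= m < T - n) h n m + h n (T - n)%N)); last first.
  apply: eq_big_nat => n /andP[_ hn]; rewrite subSn // big_nat_recr //.
rewrite big_split /=; congr (_ + _).
by rewrite [RHS]big_nat_recr //= subnn [X in _ = _ + X]big_geq // addr0.
Qed.

Lemma expS_comp (F : fieldType) (hF : [pchar F] =i pred0) a b lo (g : int -> F) k :
  zb g lo -> expS a lo (expS b lo g) k = expS (a + b) lo g k.
Proof.
move=> hg.
set T := (absz (k - lo)%R).+1.
rewrite (@expS_W _ a lo _ k T); [|exact: zb_expS|lia].
have hin : forall n : nat, expS b lo g (k - n%:Z) = \sum_(0 <= m < T) alpha b m * g (k - n%:Z - m%:Z).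
  by move=> n; apply: expS_W => //; lia.
under eq_bigr => n _ do rewrite hin mulr_sumr.
rewrite /expS -/T.
under [RHS]eq_bigr => p _ do rewrite alphaD // mulr_suml.
pose h := fun n m : nat => alpha a n * alpha b m * g (k - (n + m)%N%:Z).
transitivity (\sum_(0 <= p < T) \sum_(0 <= n < p.+1) h n (p - n)%N); last first.
  apply: eq_bigr => p _; apply: eq_big_nat => n /andP[_ hn]; rewrite /h; congr (_ * g _); lia.
rewrite sum_tri; apply: eq_bigr => n _.
rewrite (@sum_ext0 _ _ T (T - n)).
- apply: eq_bigr => m _; rewrite /h mulrA; congr (_ * g _); lia.
- move=> m hm; rewrite hg ?mulr0 //; lia.
- move=> m hm; rewrite /h hg ?mulr0 //; lia.
Qed.

Definition B (F : fieldType) (c : F) (M k : nat) : F := ('C(M, k))%:R * c ^+ (M - k).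

Definition u (F : fieldType) (c : F) (k M : nat) : F :=
  match k, M with
  | 0, _ => (M == 0)%:R
  | k'.+1, 0 => 0
  | k'.+1, M'.+1 => B c M' k'
  end.

Lemma B0 (F : fieldType) (c : F) M : B c M 0 = c ^+ M.
Proof. by rewrite /B bin0 subn0 mul1r. Qed.

Lemma Bsmall (F : fieldType) (c : F) M k : (M < k)%N -> B c M k = 0.
Proof. by move=> h; rewrite /B bin_small // mul0r. Qed.

Lemma Bpascal (F : fieldType) (c : F) M k : B c M.+1 k.+1 = B c M k + c * B c M k.+1.
Proof.
rewrite /B binS addnC natrD mulrDl subSS; congr (_ + _).
case: (ltnP k M) => h.
  by rewrite mulrCA -exprS; congr (_ * _ ^+ _); lia.
by rewrite bin_small ?mul0r ?mulr0 //; lia.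
Qed.

Lemma Babs (F : fieldType) (c : F) M k : (k.+1)%:R * B c M.+1 k.+1 = (M.+1)%:R * B c M k.
Proof. by rewrite /B !mulrA -!natrM -mul_bin_diag subSS. Qed.

Lemma u_big (F : fieldType) (c : F) k M : (M < k)%N -> u c k M = 0.
Proof. case: k => [|k] //; case: M => [|M] //= h; apply: Bsmall; lia. Qed.

Lemma uL (F : fieldType) (c : F) k M :
  \sum_(0 <= i < M.+1) c ^+ i * u c k (M - i)%N = B c M k.
Proof.
elim: M => [|M IH].
  rewrite big_nat1 expr0 mul1r subnn; case: k => [|k] /=.
    by rewrite B0 expr0.
  by rewrite Bsmall.
rewrite big_nat_recl //.
under eq_bigr => i _ do rewrite exprS subSS -mulrA.
rewrite -mulr_sumr IH expr0 mul1r subn0.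
case: k IH => [|k] IH /=.
  by rewrite add0r !B0 exprS.
by rewrite Bpascal.
Qed.

Lemma K0 (F : fieldType) (c : F) M :
  u c 0 M = (M.+1)%:R * u c 1 M.+1 - 2 * c * M%:R * u c 1 M
            + c ^+ 2 * (M - 1)%N%:R * u c 1 (M - 1)%N.
Proof.
case: M => [|[|n]] /=.
- rewrite B0 sub0n; ring.
- rewrite !B0 subnn; ring.
- rewrite !B0 subn1 /= -!natr1; rewrite !exprS; ring.
Qed.

Lemma KS (F : fieldType) (c : F) j M :
  (j.+2)%:R * u c j.+1 M = (M.+1)%:R * u c j.+2 M.+1 - 2 * c * M%:R * u c j.+2 M
            + c ^+ 2 * (M - 1)%N%:R * u c j.+2 (M - 1)%N.
Proof.
case: M => [|[|n]] /=.
- rewrite Bsmall //; ring.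
- rewrite (@Bsmall _ _ 0 j.+1) //.
  case: j => [|j].
    by rewrite /B !bin0 !subn0 !expr0 bin1 subnn; ring.
  by rewrite !Bsmall //; ring.
- rewrite subn1 /=.
  have h1 := Babs c n.+2 j.+1. have h2 := Babs c n.+1 j.+1. have h3 := Babs c n j.+1.
  have e1 : (n.+3)%:R * B c n.+2 j.+1 = (j.+2)%:R * B c n.+3 j.+2 by rewrite h1.
  have e2 : (n.+2)%:R * B c n.+1 j.+1 = (j.+2)%:R * B c n.+2 j.+2 by rewrite h2.
  have e3 : (n.+1)%:R * B c n j.+1 = (j.+2)%:R * B c n.+1 j.+2 by rewrite h3.
  rewrite e1 -[2 * c * _ * _]mulrA e2 -[c ^+ 2 * _ * _]mulrA e3.
  rewrite (Bpascal c n.+2 j.+1) (Bpascal c n.+1 j.+1) (Bpascal c n.+1 j).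
  ring.
Qed.

Lemma Kall (F : fieldType) (c : F) j M :
  (j.+1)%:R * u c j M = (M.+1)%:R * u c j.+1 M.+1 - 2 * c * M%:R * u c j.+1 M
            + c ^+ 2 * (M - 1)%N%:R * u c j.+1 (M - 1)%N.
Proof. case: j => [|j]; first by rewrite mul1r K0. exact: KS. Qed.

Definition fschur (F : fieldType) (c : F) : nat -> lser F :=
  fun m => if m == 0%N then lzero F else ttilde_hbar c m.

Lemma sem_fschur (F : fieldType) (c : F) m t k :
  sem (lmul (fschur c m) t) k = if m == 0%N then 0 else c ^+ m.-1 * sem t (k + 1).
Proof.
rewrite /fschur; case: ifP => _; first exact: sem_mul_zero.
rewrite (@lmul_delta _ _ _ (-1)).
  by rewrite sem_ttilde eqxx opprK.
by move=> i /negbTE hi; rewrite sem_ttilde hi.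
Qed.

Lemma iota_index n : iota 0 n = index_iota 0 n.
Proof. by rewrite /index_iota subn0. Qed.

Lemma sem_xpow (F : fieldType) (c : F) k M q :
  sem (xpow (fschur c) k M) q = if q == - (k%:Z) then u c k M else 0.
Proof.
elim: k M q => [|k IH] M q.
  rewrite /xpow /= /xunit; case: M => [|M] /=.
    by rewrite sem_lconst oppr0.
  by rewrite sem_lzero; case: ifP.
rewrite /xpow iterS -/(xpow (fschur c) k) /xmul sem_lsum iota_index.
under eq_bigr => i _ do rewrite sem_fschur IH.
case: (eqVneq q (- (k.+1)%:Z)) => hq.
  rewrite (_ : (q + 1 == - k%:Z) = true); last by apply/eqP; lia.
  case: M => [|M]; first by rewrite big_nat1.
  rewrite big_nat_recl //= add0r -(uL c k M).
  by apply: eq_bigr => i _; rewrite subSS.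
rewrite (_ : (q + 1 == - k%:Z) = false); last by apply: contraNF hq => /eqP e; apply/eqP; lia.
by rewrite big1 // => i _; case: ifP => //; rewrite mulr0.
Qed.

Definition acoef (F : fieldType) (c : F) (M : nat) (q : int) : F :=
  if q <= 0 then u c (absz q) M / ((absz q)`!)%:R else 0.

Lemma sem_schur (F : fieldType) (c : F) M q :
  sem (schur_row (ttilde_hbar c) M) q = acoef c M q.
Proof.
rewrite /schur_row /xexp.
have -> : (fun m : nat => if m == 0%N then lzero F else ttilde_hbar c m) = fschur c by [].
rewrite sem_lsum iota_index.
under eq_bigr => k _ do rewrite sem_lscale sem_xpow.
rewrite /acoef; case: ifP => hq.
  case: (leqP (absz q) M) => hj.
    rewrite (@sum_single _ _ (absz q)); last 2 first.
    - lia.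
    - move=> n hn; rewrite ifF ?mulr0 //; apply/negbTE; apply/eqP => e.
      by apply: hn; lia.
    by rewrite ifT; [by rewrite mulrC | apply/eqP; lia].
  rewrite u_big // mul0r big_nat_cond big1 // => n /andP[/andP[_ hn] _]; rewrite ifF ?mulr0 //.
  by apply/negbTE; apply/eqP => e; lia.
move/negbT: hq; rewrite -ltNge => hq.
by rewrite big1 // => n _; rewrite ifF ?mulr0 //; apply/negbTE; apply/eqP => e; lia.
Qed.

Lemma zb_acoef (F : fieldType) (c : F) M lo : lo <= - (M%:Z) -> zb (acoef c M) lo.
Proof.
move=> hlo q hq; rewrite /acoef ifT; last lia.
by rewrite u_big ?mul0r //; lia.
Qed.

Definition dd (F : fieldType) (N : nat) : F := ((N * (N - 1))%N)%:R / 2.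

Lemma two_nz (F : fieldType) (hF : [pchar F] =i pred0) : (2 : F) != 0.
Proof. by rewrite (pcharf0P _).1. Qed.

Lemma nat_nz (F : fieldType) (hF : [pchar F] =i pred0) n : (n.+1)%:R != 0 :> F.
Proof. by rewrite (pcharf0P _).1. Qed.

Lemma dd_succ (F : fieldType) (hF : [pchar F] =i pred0) N : N%:R + dd F N = dd F N.+1.
Proof.
rewrite /dd.
have -> : (N.+1 * (N.+1 - 1))%N = (N * (N - 1) + 2 * N)%N.
  case: N => [|N] //; rewrite subn1 /= !mulSn !mulnS; lia.
rewrite natrD natrM; field; exact: two_nz.
Qed.

Lemma sem_Psi (F : fieldType) (c : F) N (lo k : int) :
  lo <= - (N%:Z) -> sem (Psi c N) k = expS (dd F N) lo (acoef c N) k.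
Proof.
move=> hlo; rewrite /Psi lmul_comm (@lmul_exp _ _ _ lo).
  by apply: expS_ext => q; rewrite sem_schur.
by rewrite /zb => q hq; rewrite sem_schur; exact: (@zb_acoef _ c N lo hlo q hq).
Qed.

Lemma acoef_rec (F : fieldType) (hF : [pchar F] =i pred0) (c : F) M q :
  acoef c M q = M.+1%:R * acoef c M.+1 (q - 1) - 2 * c * (M%:R * acoef c M (q - 1))
                + c ^+ 2 * ((M - 1)%N%:R * acoef c (M - 1)%N (q - 1)).
Proof.
case: (lerP q 0) => hq.
  rewrite /acoef ifT // !ifT; try lia.
  have -> : absz (q - 1) = (absz q).+1 by lia.
  move: (absz q) => j.
  have K := Kall c j M.
  rewrite (_ : u c j M = ((j.+1)%:R * u c j M) / (j.+1)%:R); last first.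
    by field; rewrite nat1r nat_nz.
  rewrite K factS natrM; field.
  by rewrite fact_nz // nat1r nat_nz.
case: (eqVneq q 1) => [->|h1].
  rewrite /acoef.
  rewrite subrr lexx /= !divr1.
  case: M => [|[|n]] /=; rewrite ?subn1 /=; ring.
rewrite /acoef ifF; last lia.
rewrite !ifF; try (apply/negbTE; rewrite -ltNge; lia).
ring.
Qed.

Lemma geom_T (F : fieldType) (c : F) (a b : nat -> F) :
  b 0%N = 0 -> (forall M, a M = b M.+1 - 2 * c * b M + c ^+ 2 * b (M - 1)%N) ->
  forall N, \sum_(0 <= n < N.+1) c ^+ n * a (N - n)%N = b N.+1 - c * b N.
Proof.
move=> b0 hr; elim=> [|N IH].
  by rewrite big_nat1 expr0 mul1r subnn hr sub0n b0; ring.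
rewrite big_nat_recl // expr0 mul1r subn0.
under eq_bigr => n _ do rewrite subSS exprS -mulrA.
rewrite -mulr_sumr IH hr subn1 /=; ring.
Qed.

Lemma geom_G (F : fieldType) (c : F) (a b : nat -> F) :
  b 0%N = 0 -> (forall M, a M = b M.+1 - 2 * c * b M + c ^+ 2 * b (M - 1)%N) ->
  forall N, \sum_(0 <= n < N.+1) (n.+1)%:R * c ^+ n * a (N - n)%N = b N.+1.
Proof.
move=> b0 hr; elim=> [|N IH].
  by rewrite big_nat1 expr0 mulr1 mul1r subnn hr sub0n b0; ring.
rewrite big_nat_recl // expr0 mulr1 mul1r subn0.
have E : \sum_(0 <= n < N.+1) (n.+2)%:R * c ^+ n.+1 * a (N.+1 - n.+1)%N
   = c * \sum_(0 <= n < N.+1) (n.+1)%:R * c ^+ n * a (N - n)%N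
     + c * \sum_(0 <= n < N.+1) c ^+ n * a (N - n)%N.
  rewrite !mulr_sumr -big_split; apply: eq_bigr => n _ /=.
  rewrite subSS exprS -(natr1 n.+1); ring.
rewrite E IH (geom_T b0 hr) hr subn1 /=; ring.
Qed.

Lemma sem_iter (F : fieldType) (hF : [pchar F] =i pred0) (c : F) n M (lo q : int) :
  (n <= M)%N -> lo <= - (M%:Z) ->
  sem (iter n (@op_xey F) (Psi c) M) q = expS (dd F M) lo (acoef c (M - n)) q.
Proof.
elim: n M q => [|n IH] M q hn hlo.
  by rewrite /= subn0 (sem_Psi _ _ hlo).
case: M hn hlo => [|M] // hn hlo.
rewrite iterS /op_xey /op_x /op_ey /= mul1r.
rewrite (@lmul_exp _ _ _ lo); last first.
  rewrite /zb => q' hq'; rewrite IH; [|lia|lia].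
  have hz : zb (acoef c (M - n)) lo by apply: zb_acoef; lia.
  exact: (zb_expS _ hz hq').
rewrite (@expS_ext _ _ _ _ (expS (dd F M) lo (acoef c (M - n)))); last first.
  by move=> q'; apply: IH; lia.
rewrite expS_comp //; last by apply: zb_acoef; lia.
have -> : ((M%:Z)%:~R : F) + dd F M = dd F M.+1 by exact: dd_succ.
by rewrite subSS.
Qed.

Lemma sem_op_y (F : fieldType) (G : nat -> lser F) N k :
  sem (op_y G N) k = N%:R * sem (G N) (k - 1).
Proof. by rewrite /op_y sem_mul_hbar sem_lscale. Qed.

Lemma sem_op_xey (F : fieldType) (G : nat -> lser F) N (lo k : int) :
  zb (sem (G N)) lo -> sem (op_xey G N.+1) k = expS N%:R lo (sem (G N)) k.
Proof. by move=> h; rewrite /op_xey /op_x /op_ey /= mul1r (lmul_exp _ _ h). Qed.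

Lemma sem_op_eym1 (F : fieldType) (G : nat -> lser F) N (lo k : int) :
  zb (sem (G N)) lo -> sem (op_ey (-1) G N) k = expS (- N%:R) lo (sem (G N)) k.
Proof.
by move=> h; rewrite /op_ey mulN1r (lmul_exp _ _ h) mulrNz.
Qed.

Lemma zb_Psi (F : fieldType) (c : F) N (lo : int) : lo <= - (N%:Z) -> zb (sem (Psi c N)) lo.
Proof.
move=> hlo q hq; rewrite (sem_Psi _ _ hlo).
exact: (zb_expS _ (zb_acoef _ hlo) hq).
Qed.

Lemma sem_yPsi (F : fieldType) (c : F) N (lo k : int) : lo <= - (N%:Z) ->
  sem (op_y (Psi c) N) k = expS (dd F N) lo (fun q => N%:R * acoef c N (q - 1)) k.
Proof.
move=> hlo; rewrite sem_op_y (sem_Psi _ _ hlo) expS_scale -expS_shift //.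
exact: zb_acoef.
Qed.

Lemma zb_yPsi (F : fieldType) (c : F) N (lo : int) : lo <= - (N%:Z) -> zb (sem (op_y (Psi c) N)) lo.
Proof.
move=> hlo q hq; rewrite sem_op_y (@zb_Psi _ c N lo hlo) ?mulr0 //; lia.
Qed.

Lemma eT1 (F : fieldType) (hF : [pchar F] =i pred0) (c : F) N k :
  sem (op_ey (-1) (op_xinv (op_y (Psi c))) N) k =
  expS (dd F N) (- (N.+1%:Z)) (fun q => N.+1%:R * acoef c N.+1 (q - 1)) k.
Proof.
rewrite (@sem_op_eym1 _ _ _ (- (N.+1%:Z))); last exact: zb_yPsi.
rewrite /op_xinv.
rewrite (@expS_ext _ _ _ _ (expS (dd F N.+1) (- (N.+1%:Z)) (fun q => N.+1%:R * acoef c N.+1 (q - 1)))); last first.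
  by move=> q; apply: sem_yPsi.
rewrite expS_comp //; last first.
  move=> q hq; rewrite (@zb_acoef _ c N.+1 (- (N.+1%:Z))) ?mulr0 //; lia.
by rewrite -(dd_succ hF N) addKr.
Qed.

Lemma part1 (F : fieldType) (hF : [pchar F] =i pred0) (c : F) :
  xzero (xadd (op_xey (op_geom2 c (Psi c))) (xopp (op_y (Psi c)))).
Proof.
move=> N k; rewrite /xadd /xopp sem_ladd sem_lopp.
case: N => [|N].
  by rewrite /op_xey /op_x sem_lzero sem_op_y mul0r oppr0 addr0.
set lo := - (N.+1%:Z).
pose h := fun q : int => N.+1%:R * acoef c N.+1 (q - 1).
have hG : forall q, sem (op_geom2 c (Psi c) N) q = expS (dd F N) lo h q.
  move=> q; rewrite /op_geom2 sem_lsum iota_index.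
  transitivity (expS (dd F N) lo
     (fun q => \sum_(0 <= n < N.+1) (n.+1)%:R * c ^+ n * acoef c (N - n) q) q).
    rewrite expS_sum; apply: eq_big_nat => n /andP[_ hn].
    rewrite sem_lscale (@sem_iter _ hF c n N lo q); [|lia|rewrite /lo; lia].
    by rewrite -expS_scale.
  apply: expS_ext => q'; rewrite /h.
  apply: (@geom_G _ c (fun M => acoef c M q') (fun M => M%:R * acoef c M (q' - 1))).
  - by rewrite mul0r.
  - by move=> M; rewrite (acoef_rec hF) !mulrA.
have zh : zb h lo by move=> q hq; rewrite /h (@zb_acoef _ c N.+1 lo) ?mulr0 //; rewrite /lo in hq *; lia.
rewrite (@sem_op_xey _ _ _ lo); last first.
  by move=> q hq; rewrite hG; exact: (zb_expS _ zh hq).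
rewrite (expS_ext _ _ _ hG) expS_comp //.
have -> : (N%:R : F) + dd F N = dd F N.+1 by exact: dd_succ.
rewrite (@sem_yPsi _ c N.+1 lo) ?subrr //; rewrite /lo; lia.
Qed.

Lemma e3 (F : fieldType) (hF : [pchar F] =i pred0) (c : F) N k :
  sem (op_xey (op_y (Psi c)) N) k =
  expS (dd F N) (- (N.+1%:Z)) (fun q => (N - 1)%N%:R * acoef c (N - 1)%N (q - 1)) k.
Proof.
case: N => [|N].
  rewrite /op_xey /op_x sem_lzero (@expS_ext _ _ _ _ (fun _ => 0)) ?expS0 //.
  by move=> q; rewrite sub0n mul0r.
rewrite (@sem_op_xey _ _ _ (- (N.+2%:Z))); last by apply: zb_yPsi; lia.
rewrite (@expS_ext _ _ _ _ (expS (dd F N) (- (N.+2%:Z)) (fun q => N%:R * acoef c N (q - 1)))); last first.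
  by move=> q; apply: sem_yPsi; lia.
rewrite expS_comp //; last first.
  move=> q hq; rewrite (@zb_acoef _ c N (- (N.+2%:Z))) ?mulr0 //; lia.
have -> : (N%:R : F) + dd F N = dd F N.+1 by exact: dd_succ.
by rewrite subn1.
Qed.

Lemma part2 (F : fieldType) (hF : [pchar F] =i pred0) (c : F) :
  xzero (xadd (Psi c)
           (xopp (xadd (xadd (op_ey (-1) (op_xinv (op_y (Psi c))))
                             (xscale (- (2 * c)) (op_y (Psi c))))
                       (xscale (c ^+ 2) (op_xey (op_y (Psi c))))))).
Proof.
move=> N k; rewrite /xadd /xopp /xscale !sem_ladd sem_lopp !sem_ladd !sem_lscale.
rewrite (@sem_Psi _ c N (- (N.+1%:Z))); last lia.
rewrite (eT1 hF) (e3 hF) (@sem_yPsi _ c N (- (N.+1%:Z))); last lia.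
rewrite -!expS_scale -expS_addf -expS_addf -expS_oppf -expS_addf.
rewrite (@expS_ext _ _ _ _ (fun _ => 0)) ?expS0 // => q /=.
rewrite (acoef_rec hF c N q); ring.
Qed.

Lemma part3 (F : fieldType) (hF : [pchar F] =i pred0) :
  xzero (xadd (op_ey (-1) (op_xinv (op_y (Psi (0 : F))))) (xopp (Psi (0 : F)))).
Proof.
move=> N k; rewrite /xadd /xopp sem_ladd sem_lopp (eT1 hF).
rewrite (@sem_Psi _ 0 N (- (N.+1%:Z))); last lia.
rewrite -expS_oppf -expS_addf.
rewrite (@expS_ext _ _ _ _ (fun _ => 0)) ?expS0 // => q /=.
rewrite (acoef_rec hF 0 N q); ring.
Qed.

Theorem mainTheorem12 (F : fieldType) (hF : [pchar F] =i pred0) (c : F) :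
  (* ( xhat e^yhat / (1 - c xhat e^yhat)^2 - yhat ) Psi = 0 *)
  xzero (xadd (op_xey (op_geom2 c (Psi c))) (xopp (op_y (Psi c))))
  /\
  (* ( 1 - (e^{-yhat} xhat^{-1} - 2c + c^2 xhat e^yhat) yhat ) Psi = 0 *)
  xzero (xadd (Psi c)
           (xopp (xadd (xadd (op_ey (-1) (op_xinv (op_y (Psi c))))
                             (xscale (- (2 * c)) (op_y (Psi c))))
                       (xscale (c ^+ 2) (op_xey (op_y (Psi c)))))))
  /\
  (* c = 0 : ( e^{-yhat} xhat^{-1} yhat - 1 ) Psi = 0 *)
  xzero (xadd (op_ey (-1) (op_xinv (op_y (Psi (0 : F))))) (xopp (Psi (0 : F)))).
Proof.
split; first exact: part1.
split; first exact: part2.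
exact: part3.
Qed.
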